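(* Let $n\ge4$, $\mu_1,\mu_2,\beta>0$, $p=2q+1$ with $\frac{n}{n-2}<p<\frac{n+2}{n-2}$, and let $(w_1,w_2)$ be a nonnegative $C^2$ solution on $\mathbb{R}$ of $$w_1''+\tau w_1'-\sigma w_1+\mu_1w_1^{2q+1}+\beta w_1^qw_2^{q+1}=0,\qquad w_2''+\tau w_2'-\sigma w_2+\mu_2w_2^{2q+1}+\beta w_2^qw_1^{q+1}=0.$$ If $\liminf_{t\to+\infty}w_1(t)=\liminf_{t\to+\infty}w_2(t)=0$, then $\liminf_{t\to+\infty}(w_1+w_2)(t)=0$.
   Context: $\tau=\frac4{p-1}-n+2$, $\sigma=\frac2{p-1}\big(n-2-\frac2{p-1}\big)$; both are positive in the stated range of $p$. *)

(* Defs.v *)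
From Stdlib Require Import Reals Lra.
Open Scope R_scope.

(* Real power x^a for x >= 0, with the convention 0^a = 0 (used for a > 0).
   Stdlib's Rpower 0 a = 1, so we patch the value at 0. *)
Definition rpow (x a : R) : R := if Rle_dec x 0 then 0 else Rpower x a.

Definition tau_np (n : nat) (p : R) : R := 4 / (p - 1) - INR n + 2.
Definition sigma_np (n : nat) (p : R) : R := 2 / (p - 1) * (INR n - 2 - 2 / (p - 1)).

Definition liminf_pinfty_eq (f : R -> R) (l : R) : Prop :=
  forall eps : R, eps > 0 ->
    (exists T : R, forall t : R, t >= T -> f t > l - eps) /\
    (forall T : R, exists t : R, t >= T /\ f t < l + eps).

(* Main.v *)
Require Import Defs.
From Stdlib Require Import Reals Lra Classical.
Open Scope R_scope.
Lemma dexp (tau v : R) : derivable_pt_lim (fun v => exp (tau*v)) v (tau * exp (tau*v)).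
Proof.
  assert (H1 : derivable_pt_lim (fun v => tau*v) v (tau*1)).
  { exact (derivable_pt_lim_scal (fun v => v) tau v 1 (derivable_pt_lim_id v)). }
  rewrite Rmult_1_r in H1.
  assert (H := derivable_pt_lim_comp (fun v => tau*v) exp v tau (exp (tau*v)) H1 (derivable_pt_lim_exp _)).
  replace (tau * exp (tau*v)) with (exp (tau*v) * tau) by ring.
  exact H.
Qed.
Lemma dg (f' f'' : R -> R) tau (Hdd : forall t, derivable_pt_lim f' t (f'' t)) v :
  derivable_pt_lim (fun v => exp (tau*v) * f' v) v (tau*exp(tau*v)*f' v + exp(tau*v)*f'' v).
Proof.
  exact (derivable_pt_lim_mult (fun v => exp (tau*v)) f' v _ _ (dexp tau v) (Hdd v)).
Qed.
Lemma decr (f f' f'' : R -> R) tau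
  (Hd : forall t, derivable_pt_lim f t (f' t)) (Hdd : forall t, derivable_pt_lim f' t (f'' t))
  x y : x <= y -> (forall v, x <= v <= y -> f'' v + tau * f' v <= 0) -> f' x <= 0 -> f y <= f x.
Proof.
  intros Hxy Hv Hx.
  assert (Hneg : forall v, x <= v <= y -> f' v <= 0).
  { intros v [Hv1 Hv2]. destruct (Rle_lt_or_eq_dec x v Hv1) as [Hlt|Heq]; [|subst; lra].
    destruct (MVT_cor2 (fun v => exp (tau*v) * f' v)
       (fun v => tau*exp(tau*v)*f' v + exp(tau*v)*f'' v) x v Hlt) as [c [Hc1 Hc2]].
    { intros c _; apply dg; exact Hdd. }
    assert (He : 0 < exp (tau * c)) by apply exp_pos.
    assert (He2 : 0 < exp (tau * v)) by apply exp_pos.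
    assert (He3 : 0 < exp (tau * x)) by apply exp_pos.
    assert (Hcv : f'' c + tau * f' c <= 0) by (apply Hv; lra).
    assert (Hprod : (tau * exp (tau * c) * f' c + exp (tau * c) * f'' c) * (v - x) <= 0).
    { replace (tau * exp (tau * c) * f' c + exp (tau * c) * f'' c)
        with (exp (tau*c) * (f'' c + tau * f' c)) by ring.
      assert (0 < v - x) by lra. assert (exp (tau*c) * (f'' c + tau * f' c) <= 0) by nra. nra. }
    assert (exp (tau * v) * f' v <= 0) by nra.
    nra. }
  destruct (Rle_lt_or_eq_dec x y Hxy) as [Hlt|Heq]; [|subst; lra].
  destruct (MVT_cor2 f f' x y Hlt) as [c [Hc1 Hc2]]. { intros; apply Hd. }
  assert (f' c <= 0) by (apply Hneg; lra). nra.
Qed.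
Lemma cont_eps f x : continuity_pt f x -> forall e, 0 < e ->
  exists d, 0 < d /\ forall y, Rabs (y - x) < d -> Rabs (f y - f x) < e.
Proof.
  intros H e He. destruct (H e He) as [d [Hd H']]. exists d; split; [exact Hd|].
  intros y Hy. destruct (Req_dec y x) as [->|Hne].
  { rewrite Rminus_diag, Rabs_R0; exact He. }
  apply H'. split; [split; [exact I| auto]|]. exact Hy.
Qed.

Lemma valley (f f' f'' : R -> R) tau th a c
  (Hd : forall t, derivable_pt_lim f t (f' t)) (Hdd : forall t, derivable_pt_lim f' t (f'' t)) :
  a < c -> th <= f a -> th <= f c -> (exists b, a <= b <= c /\ f b < th) ->
  (forall v, a <= v <= c -> f v < th -> f'' v + tau * f' v <= 0) -> False.
Proof.
  intros Hac Ha Hc [b [Hb Hfb]] Hv.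
  assert (Hcont : forall t, continuity_pt f t).
  { intro t. apply derivable_continuous_pt. exists (f' t). apply Hd. }
  destruct (continuity_ab_min f a c (Rlt_le _ _ Hac) (fun t _ => Hcont t)) as [m [Hmin Hm]].
  assert (Hfm : f m < th) by (specialize (Hmin b Hb); lra).
  assert (Ham : a < m) by (destruct (Rle_lt_or_eq_dec a m (proj1 Hm)); [auto| subst; lra]).
  assert (Hmc : m < c) by (destruct (Rle_lt_or_eq_dec m c (proj2 Hm)); [auto| subst; lra]).
  assert (Hf'm : f' m = 0).
  { pose (pr := exist (fun l => derivable_pt_abs f m l) (f' m) (Hd m) : derivable_pt f m).
    rewrite <- (derive_pt_eq_0 f m (f' m) pr (Hd m)).
    apply (deriv_minimum f a c m pr Ham Hmc). intros; apply Hmin; lra. }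
  pose (S := fun t => m <= t <= c /\ forall u, m <= u <= t -> f u < th).
  assert (HSm : S m). { split; [lra|]. intros u Hu. replace u with m by lra. exact Hfm. }
  assert (Hbd : bound S). { exists c. intros t Ht. apply Ht. }
  destruct (completeness S Hbd (ex_intro _ m HSm)) as [r [Hub Hlub]].
  assert (Hmr : m <= r) by (apply Hub; exact HSm).
  assert (Hrc : r <= c) by (apply Hlub; intros t Ht; apply Ht).
  assert (C1 : forall u, m <= u < r -> f u < th).
  { intros u Hu. destruct (classic (exists t, S t /\ u < t)) as [[t [Ht Hut]]|Hno].
    - apply (proj2 Ht). lra.
    - exfalso. assert (r <= u); [|lra]. apply Hlub. intros t Ht.
      destruct (Rle_dec t u) as [|Hn]; [auto|]. exfalso; apply Hno; exists t; split; [auto|lra]. }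
  assert (C2 : forall u, m <= u < r -> f u <= f m).
  { intros u Hu. apply (decr f f' f'' tau Hd Hdd); [lra| |lra].
    intros v Hv'. apply Hv; [lra|]. apply C1. lra. }
  assert (C3 : f r <= f m).
  { destruct (Rle_lt_or_eq_dec m r Hmr) as [Hlt|Heq]; [|subst; lra].
    destruct (Rle_dec (f r) (f m)) as [|Hn]; [auto|exfalso].
    destruct (cont_eps f r (Hcont r) (f r - f m)) as [d [Hd0 Hdd0]]; [lra|].
    pose (v := Rmax m (r - d/2)).
    assert (Hv1 : m <= v) by apply Rmax_l.
    assert (Hv2 : v < r) by (unfold v; apply Rmax_lub_lt; lra).
    assert (Hv3 : r - d/2 <= v) by apply Rmax_r.
    specialize (C2 v (conj Hv1 Hv2)). specialize (Hdd0 v).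
    assert (Rabs (v - r) < d) by (rewrite Rabs_left; lra).
    specialize (Hdd0 H). apply Rabs_def2 in Hdd0. lra. }
  assert (Hrc' : r < c) by (destruct (Rle_lt_or_eq_dec r c Hrc); [auto| subst; lra]).
  destruct (cont_eps f r (Hcont r) (th - f r)) as [d [Hd0 Hdd0]]; [lra|].
  pose (t := Rmin c (r + d/2)).
  assert (Ht1 : t <= c) by apply Rmin_l.
  assert (Ht2 : t <= r + d/2) by apply Rmin_r.
  assert (Ht3 : r < t) by (unfold t; apply Rmin_glb_lt; lra).
  assert (HSt : S t).
  { split; [lra|]. intros u Hu. destruct (Rlt_le_dec u r) as [Hur|Hur].
    - apply C1; lra.
    - assert (Rabs (u - r) < d) by (rewrite Rabs_right; lra).
      specialize (Hdd0 u H). apply Rabs_def2 in Hdd0. lra. }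
  specialize (Hub t HSt). lra.
Qed.
Lemma Rpower_base_lt x y e : 0 < x -> x < y -> 0 < e -> Rpower x e < Rpower y e.
Proof. intros. unfold Rpower. apply exp_increasing. apply Rmult_lt_compat_l; auto. apply ln_increasing; auto. Qed.
Lemma Rpower_base_le x y e : 0 < x -> x <= y -> 0 < e -> Rpower x e <= Rpower y e.
Proof. intros. destruct (Rle_lt_or_eq_dec x y H0). left; apply Rpower_base_lt; auto. subst; lra. Qed.
Lemma rpow_pos x a : 0 < x -> rpow x a = Rpower x a.
Proof. intros. unfold rpow. destruct (Rle_dec x 0); [lra|auto]. Qed.
Lemma rpow_0 a : rpow 0 a = 0.
Proof. unfold rpow. destruct (Rle_dec 0 0); [auto|lra]. Qed.
Lemma rpow_ge0 x a : 0 <= rpow x a.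
Proof. unfold rpow. destruct (Rle_dec x 0); [lra|]. unfold Rpower. left; apply exp_pos. Qed.

Lemma Kth (sg be q eps : R) : 0 < be -> 0 < q < 1 -> 0 < eps ->
  exists th, 0 < th /\ th <= eps/2 /\ forall x y, 0 < x -> x < th -> eps/2 <= y ->
    sg * x <= be * rpow x q * rpow y (q+1).
Proof.
  intros Hb Hq He.
  pose (A := be * Rpower (eps/2) (q+1)).
  assert (HA : 0 < A) by (unfold A, Rpower; apply Rmult_lt_0_compat; [auto|apply exp_pos]).
  pose (S := Rabs sg + 1).
  assert (HS : 0 < S) by (unfold S; pose proof (Rabs_pos sg); lra).
  pose (th' := Rpower (A/S) (1/(1-q))).
  assert (Hth' : 0 < th') by (unfold th', Rpower; apply exp_pos).
  exists (Rmin (eps/2) th'). split; [apply Rmin_glb_lt; lra|]. split; [apply Rmin_l|].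
  intros x y Hx Hxt Hy.
  assert (Hxt' : x < th') by (pose proof (Rmin_r (eps/2) th'); lra).
  rewrite (rpow_pos x q Hx), (rpow_pos y (q+1)) by lra.
  assert (H1 : Rpower (eps/2) (q+1) <= Rpower y (q+1)) by (apply Rpower_base_le; lra).
  assert (Hxq : 0 < Rpower x q) by (unfold Rpower; apply exp_pos).
  assert (H2 : Rpower x (1-q) < A / S).
  { apply Rlt_le_trans with (Rpower th' (1-q)). apply Rpower_base_lt; lra.
    unfold th'. rewrite Rpower_mult. replace (1/(1-q)*(1-q)) with 1 by (field; lra).
    rewrite Rpower_1; [lra|]. apply Rdiv_lt_0_compat; auto. }
  assert (Hx1 : x = Rpower x q * Rpower x (1-q)).
  { rewrite <- Rpower_plus. replace (q + (1-q)) with 1 by ring. rewrite Rpower_1; auto. }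
  assert (Hsg : sg * x <= S * x).
  { unfold S. pose proof (Rle_abs sg). nra. }
  assert (H3 : S * Rpower x (1-q) < A).
  { apply (Rmult_lt_compat_l S) in H2; auto. replace (S * (A/S)) with A in H2 by (field; lra). exact H2. }
  assert (H4 : S * x < A * Rpower x q).
  { rewrite Hx1 at 1. nra. }
  unfold A in H4.
  assert (be * Rpower (eps/2) (q+1) * Rpower x q <= be * Rpower x q * Rpower y (q+1)).
  { replace (be * Rpower x q * Rpower y (q+1)) with (be * Rpower x q * Rpower y (q+1)) by ring.
    assert (0 < be * Rpower x q) by nra. nra. }
  lra.
Qed.
Theorem lemma4p3
  (n : nat) (mu1 mu2 beta p q : R)
  (w1 w1' w1'' w2 w2' w2'' : R -> R)
  (Hn : (4 <= n)%nat)
  (Hmu1 : 0 < mu1) (Hmu2 : 0 < mu2) (Hbeta : 0 < beta)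
  (Hpq : p = 2 * q + 1)
  (Hplo : INR n / (INR n - 2) < p) (Hphi : p < (INR n + 2) / (INR n - 2))
  (Hd1 : forall t, derivable_pt_lim w1 t (w1' t))
  (Hdd1 : forall t, derivable_pt_lim w1' t (w1'' t))
  (Hc1 : forall t, continuity_pt w1'' t)
  (Hd2 : forall t, derivable_pt_lim w2 t (w2' t))
  (Hdd2 : forall t, derivable_pt_lim w2' t (w2'' t))
  (Hc2 : forall t, continuity_pt w2'' t)
  (Hnn1 : forall t, 0 <= w1 t) (Hnn2 : forall t, 0 <= w2 t)
  (Heq1 : forall t, w1'' t + tau_np n p * w1' t - sigma_np n p * w1 t
           + mu1 * rpow (w1 t) (2 * q + 1)
           + beta * rpow (w1 t) q * rpow (w2 t) (q + 1) = 0)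
  (Heq2 : forall t, w2'' t + tau_np n p * w2' t - sigma_np n p * w2 t
           + mu2 * rpow (w2 t) (2 * q + 1)
           + beta * rpow (w2 t) q * rpow (w1 t) (q + 1) = 0)
  (Hl1 : liminf_pinfty_eq w1 0) (Hl2 : liminf_pinfty_eq w2 0) :
  liminf_pinfty_eq (fun t => w1 t + w2 t) 0.
Proof.
  assert (HN : 4 <= INR n) by (replace 4 with (INR 4) by (simpl; ring); apply le_INR; auto).
  assert (Hq : 0 < q < 1).
  { set (X := INR n / (INR n - 2)) in *. set (Y := (INR n + 2) / (INR n - 2)) in *.
    assert (HX : X * (INR n - 2) = INR n) by (unfold X; field; lra).
    assert (HY : Y * (INR n - 2) = INR n + 2) by (unfold Y; field; lra).
    assert (1 < X) by nra. assert (Y <= 3) by nra. lra. }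
  intros eps He. split.
  { exists 0. intros t _. pose proof (Hnn1 t); pose proof (Hnn2 t). lra. }
  intros T. apply NNPP. intro Hno.
  assert (Hge : forall t, t >= T -> eps <= w1 t + w2 t).
  { intros t Ht. destruct (Rlt_le_dec (w1 t + w2 t) eps) as [Hl|Hl]; [|lra].
    exfalso; apply Hno; exists t; split; [auto| lra]. }
  destruct (Kth (sigma_np n p) beta q eps Hbeta Hq He) as [th [Hth0 [Hth1 HK]]].
  destruct (proj2 (Hl2 th Hth0) T) as [a [HaT Ha]].
  destruct (proj2 (Hl1 th Hth0) (a+1)) as [b [Hba Hb]].
  destruct (proj2 (Hl2 th Hth0) (b+1)) as [c [Hcb Hc]].
  assert (Hwa : th <= w1 a) by (specialize (Hge a HaT); lra).
  assert (Hwc : th <= w1 c) by (specialize (Hge c ltac:(lra)); lra).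
  apply (valley w1 w1' w1'' (tau_np n p) th a c Hd1 Hdd1); [lra|auto|auto| |].
  - exists b. split; [lra|]. lra.
  - intros v Hv Hwv. specialize (Heq1 v). pose proof (rpow_ge0 (w1 v) (2*q+1)).
    destruct (Rle_lt_or_eq_dec 0 (w1 v) (Hnn1 v)) as [Hpos|Hz].
    + assert (Hw2 : eps/2 <= w2 v) by (specialize (Hge v ltac:(lra)); lra).
      specialize (HK (w1 v) (w2 v) Hpos Hwv Hw2). nra.
    + rewrite <- Hz in Heq1. rewrite !rpow_0 in Heq1. lra.
Qed.
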